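(* Let $(X,* )$ be an infinite compact metrizable group with identity $e$, and let $f\colon X\to X$ be a continuous group homomorphism which is transitive and satisfies $\overline{\mathcal M(f)}=X$. Let $S\subset X$ be a syndetically scrambled set for $f$ with $e\in S$, let $x\in\mathrm{Tran}(f)$, and put $T=S*x=\{a*x:a\in S\}$. Then: (i) $T$ is homeomorphic to $S$ and $T$ is syndetically scrambled for $f$; moreover, if $d$ is a two-sided invariant compatible metric on $X$ and $S$ is syndetically $\varepsilon$-scrambled with respect to $d$, then so is $T$; (ii) $T\subset\mathrm{Tran}(f)$, and for every $y\in T$ the orbit closure $\overline{\{f^n(y):n\ge0\}}$ contains infinitely many distinct minimal sets; (iii) $\mathrm{SProx}(f)(y)\cap\mathcal M(f)=\emptyset$ for every $y\in T$.
   Context: $X$ is a compact metric space, $f$ continuous. $\mathrm{Tran}(f)$ is the set of points with dense forward orbit; $f$ is transitive if for all nonempty open $U,V$ there is $n\in\mathbb N$ with $f^n(U)\cap V\ne\emptyset$. A minimal set is a nonempty closed $f$-invariant set with no proper nonempty closed invariant subset; $\mathcal M(f)$ is the set of points belonging to some minimal set. A metric $d$ is two-sided invariant if $d(a,b)=d(a*z,b*z)=d(z*a,z*b)$. Syndetic: a subset of $\mathbb N$ meeting every set containing arbitrarily long runs of consecutive integers. $\mathrm{Asy}(f)=\{(x,y):\lim_n d(f^n x,f^n y)=0\}$; $\mathrm{SProx}(f)=\{(x,y): \{n: d(f^nx,f^ny)<\varepsilon\}$ syndetic for all $\varepsilon>0\}$, and $\mathrm{SProx}(f)(y)=\{z:(y,z)\in\mathrm{SProx}(f)\}$.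 A set with at least two points is syndetically scrambled if all pairs of distinct points lie in $\mathrm{SProx}(f)\setminus\mathrm{Asy}(f)$; syndetically $\varepsilon$-scrambled if moreover $\limsup_n d(f^nx,f^ny)\ge\varepsilon$ for all distinct $x,y$ in it. *)

(* Defs.v *)
From Stdlib Require Import Reals List.
Open Scope R_scope.

Section Defs.
Context {X : Type}.

Definition is_metric (d : X -> X -> R) : Prop :=
  (forall x y, 0 <= d x y) /\
  (forall x y, d x y = 0 <-> x = y) /\
  (forall x y, d x y = d y x) /\
  (forall x y z, d x z <= d x y + d y z).

Definition is_open (d : X -> X -> R) (U : X -> Prop) : Prop :=
  forall x, U x -> exists r, 0 < r /\ forall y, d x y < r -> U y.

Definition is_closed (d : X -> X -> R) (A : X -> Prop) : Prop :=
  is_open d (fun x => ~ A x).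

Definition compact_space (d : X -> X -> R) : Prop :=
  forall (I : Type) (U : I -> X -> Prop),
    (forall i, is_open d (U i)) ->
    (forall x, exists i, U i x) ->
    exists l : list I, forall x, exists i, In i l /\ U i x.

Definition compatible_metric (d d' : X -> X -> R) : Prop :=
  is_metric d' /\ forall U, is_open d U <-> is_open d' U.

Definition continuous (d : X -> X -> R) (f : X -> X) : Prop :=
  forall x eps, 0 < eps ->
    exists delta, 0 < delta /\ forall y, d x y < delta -> d (f x) (f y) < eps.

Definition continuous2 (d : X -> X -> R) (m : X -> X -> X) : Prop :=
  forall x y eps, 0 < eps ->
    exists delta, 0 < delta /\ forall x' y', d x x' < delta -> d y y' < delta ->
      d (m x y) (m x' y') < eps.

Definition continuous_on (d : X -> X -> R) (A : X -> Prop) (h : X -> X) : Prop :=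
  forall x eps, A x -> 0 < eps ->
    exists delta, 0 < delta /\ forall y, A y -> d x y < delta -> d (h x) (h y) < eps.

Definition homeomorphic (d : X -> X -> R) (A B : X -> Prop) : Prop :=
  exists h g : X -> X,
    (forall a, A a -> B (h a)) /\ (forall b, B b -> A (g b)) /\
    (forall a, A a -> g (h a) = a) /\ (forall b, B b -> h (g b) = b) /\
    continuous_on d A h /\ continuous_on d B g.

Definition infinite_type : Prop := ~ exists l : list X, forall x, In x l.

Definition is_group (mul : X -> X -> X) (inv : X -> X) (e : X) : Prop :=
  (forall a b c, mul a (mul b c) = mul (mul a b) c) /\
  (forall a, mul e a = a /\ mul a e = a) /\
  (forall a, mul (inv a) a = e /\ mul a (inv a) = e).

Definition group_hom (mul : X -> X -> X) (f : X -> X) : Prop :=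
  forall a b, f (mul a b) = mul (f a) (f b).

Definition two_sided_invariant (mul : X -> X -> X) (d : X -> X -> R) : Prop :=
  forall a b z, d a b = d (mul a z) (mul b z) /\ d a b = d (mul z a) (mul z b).

Definition iter (f : X -> X) (n : nat) (x : X) : X := Nat.iter n f x.

Definition dense (d : X -> X -> R) (A : X -> Prop) : Prop :=
  forall x eps, 0 < eps -> exists y, A y /\ d x y < eps.

Definition orbit_closure (d : X -> X -> R) (f : X -> X) (y : X) : X -> Prop :=
  fun z => forall eps, 0 < eps -> exists n : nat, d (iter f n y) z < eps.

Definition Tran (d : X -> X -> R) (f : X -> X) : X -> Prop :=
  fun x => dense d (fun z => exists n : nat, z = iter f n x).

Definition transitive (d : X -> X -> R) (f : X -> X) : Prop :=
  forall U V, is_open d U -> is_open d V -> (exists u, U u) -> (exists v, V v) ->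
    exists n : nat, (1 <= n)%nat /\ exists u, U u /\ V (iter f n u).

Definition invariant (f : X -> X) (M : X -> Prop) : Prop :=
  forall x, M x -> M (f x).

Definition minimal_set (d : X -> X -> R) (f : X -> X) (M : X -> Prop) : Prop :=
  (exists x, M x) /\ is_closed d M /\ invariant f M /\
  forall N : X -> Prop, (exists x, N x) -> is_closed d N -> invariant f N ->
    (forall x, N x -> M x) -> forall x, M x -> N x.

Definition MinPts (d : X -> X -> R) (f : X -> X) : X -> Prop :=
  fun x => exists M, minimal_set d f M /\ M x.

Definition thick (B : nat -> Prop) : Prop :=
  forall L : nat, exists m : nat, forall i : nat, (i < L)%nat -> B (m + i)%nat.

Definition syndetic (A : nat -> Prop) : Prop :=
  forall B, thick B -> exists n, A n /\ B n.

Definition Asy (d : X -> X -> R) (f : X -> X) (x y : X) : Prop :=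
  forall eps, 0 < eps -> exists N : nat, forall n : nat, (N <= n)%nat ->
    d (iter f n x) (iter f n y) < eps.

Definition SProx (d : X -> X -> R) (f : X -> X) (x y : X) : Prop :=
  forall eps, 0 < eps -> syndetic (fun n => d (iter f n x) (iter f n y) < eps).

Definition synd_scrambled (d : X -> X -> R) (f : X -> X) (S : X -> Prop) : Prop :=
  (exists a b, S a /\ S b /\ a <> b) /\
  forall a b, S a -> S b -> a <> b -> SProx d f a b /\ ~ Asy d f a b.

Definition limsup_ge (d : X -> X -> R) (f : X -> X) (eps : R) (x y : X) : Prop :=
  forall delta, 0 < delta -> forall N : nat, exists n : nat, (N <= n)%nat /\
    eps - delta < d (iter f n x) (iter f n y).

Definition synd_eps_scrambled (d : X -> X -> R) (f : X -> X) (eps : R)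
    (S : X -> Prop) : Prop :=
  synd_scrambled d f S /\
  forall a b, S a -> S b -> a <> b -> limsup_ge d f eps a b.

End Defs.

(* Main.v *)
Require Import Defs.
From Stdlib Require Import Reals List Lra Lia Classical ClassicalEpsilon.
Open Scope R_scope.

Lemma d_sym {X} (d : X -> X -> R) (Hd : is_metric d) a b : d a b = d b a.
Proof. destruct Hd as (_&_&H&_). apply H. Qed.
Lemma d_tri {X} (d : X -> X -> R) (Hd : is_metric d) a b c : d a c <= d a b + d b c.
Proof. destruct Hd as (_&_&_&H). apply H. Qed.
Lemma d_pos {X} (d : X -> X -> R) (Hd : is_metric d) a b : 0 <= d a b.
Proof. destruct Hd as (H&_). apply H. Qed.
Lemma d_refl {X} (d : X -> X -> R) (Hd : is_metric d) a : d a a = 0.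
Proof. destruct Hd as (_&H&_). apply H; auto. Qed.
Lemma d_eq {X} (d : X -> X -> R) (Hd : is_metric d) a b :
  (forall eps, 0 < eps -> d a b < eps) -> a = b.
Proof.
  intros H. destruct Hd as (H0&H1&_). apply H1.
  destruct (Req_dec (d a b) 0) as [E|E]; auto.
  specialize (H (d a b)). specialize (H0 a b). exfalso.
  assert (0 < d a b) by lra. specialize (H H2). lra.
Qed.

Lemma inv_small eps : 0 < eps -> exists K : nat, forall k, (K <= k)%nat -> / INR (S k) < eps.
Proof.
  intros He. destruct (archimed_cor1 eps He) as [N [HN HN0]].
  exists N. intros k Hk.
  apply Rle_lt_trans with (/ INR N); auto.
  apply Rinv_le_contravar. apply lt_0_INR; lia. apply le_INR; lia.
Qed.

Lemma inv_pos k : 0 < / INR (S k).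
Proof. apply Rinv_0_lt_compat. apply lt_0_INR; lia. Qed.

Lemma closed_limit {X} (d : X -> X -> R) (Hd : is_metric d) (A : X -> Prop) q :
  is_closed d A -> (forall eps, 0 < eps -> exists w, A w /\ d q w < eps) -> A q.
Proof.
  intros HA H. apply NNPP. intros Hq.
  destruct (HA q Hq) as [r [Hr Hr']].
  destruct (H r Hr) as [w [Aw Hw]]. apply (Hr' w Hw Aw).
Qed.

Lemma closed_compl {X} (d : X -> X -> R) (A : X -> Prop) q :
  is_closed d A -> ~ A q -> exists r, 0 < r /\ forall w, A w -> r <= d q w.
Proof.
  intros HA Hq. destruct (HA q Hq) as [r [Hr Hr']]. exists r; split; auto.
  intros w Aw. destruct (Rle_or_lt r (d q w)); auto. exfalso. apply (Hr' w H Aw).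
Qed.

Lemma cluster {X} (d : X -> X -> R) (Hd : is_metric d) (Hc : compact_space d) (s : nat -> X) :
  exists p, forall eps, 0 < eps -> forall N, exists k, (N <= k)%nat /\ d p (s k) < eps.
Proof.
  apply NNPP. intros Hn.
  assert (H : forall p, exists eps, 0 < eps /\ exists N, forall k, (N <= k)%nat -> ~ d p (s k) < eps).
  { intros p. apply NNPP. intros Hp. apply Hn. exists p. intros eps He N.
    apply NNPP. intros Hk. apply Hp. exists eps. split; auto. exists N.
    intros k Hk1 Hk2. apply Hk. exists k; auto. }
  set (I := {pr : X * R * nat | let '(p, eps, N) := pr in 0 < eps /\ forall k, (N <= k)%nat -> ~ d p (s k) < eps}).
  set (U := fun (i : I) (y : X) => let '(p, eps, N) := proj1_sig i in d p y < eps).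
  destruct (Hc I U) as [l Hl].
  - intros [[[p eps] N] [He HN]]. unfold U; simpl. intros y Hy.
    exists (eps - d p y). split. lra. intros z Hz.
    pose proof (d_tri d Hd p y z). lra.
  - intros y. destruct (H y) as [eps [He [N HN]]].
    exists (exist _ (y, eps, N) (conj He HN)). unfold U; simpl. rewrite d_refl; auto.
  - set (Nmax := fold_right (fun (i : I) m => Nat.max (snd (proj1_sig i)) m) 0%nat l).
    assert (HM : forall i, In i l -> (snd (proj1_sig i) <= Nmax)%nat).
    { unfold Nmax; clear. induction l as [|a l IH]; simpl; intros i Hi. contradiction.
      destruct Hi as [<-|Hi].
      - lia.
      - specialize (IH i Hi). lia. }
    destruct (Hl (s Nmax)) as [i [Hi Ui]]. specialize (HM i Hi).
    destruct i as [[[p eps] N] [He HN]]. unfold U in Ui; simpl in *.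
    apply (HN Nmax HM Ui).
Qed.

Lemma subseq {X} (d : X -> X -> R) (s : nat -> X) p :
  (forall eps, 0 < eps -> forall N, exists k, (N <= k)%nat /\ d p (s k) < eps) ->
  exists phi : nat -> nat, forall k, (k <= phi k)%nat /\ d p (s (phi k)) < / INR (S k).
Proof.
  intros H.
  assert (H' : forall k, exists j, (k <= j)%nat /\ d p (s j) < / INR (S k)).
  { intros k. apply H. apply inv_pos. }
  exists (fun k => proj1_sig (constructive_indefinite_description _ (H' k))).
  intros k. destruct (constructive_indefinite_description _ (H' k)); simpl; auto.
Qed.

Lemma cluster2 {X} (d : X -> X -> R) (Hd : is_metric d) (Hc : compact_space d) (s t : nat -> X) :
  exists p q, forall eps, 0 < eps -> forall N, exists k, (N <= k)%nat /\ d p (s k) < eps /\ d q (t k) < eps.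
Proof.
  destruct (cluster d Hd Hc s) as [p Hp].
  destruct (subseq d s p Hp) as [phi Hphi].
  destruct (cluster d Hd Hc (fun k => t (phi k))) as [q Hq].
  exists p, q. intros eps He N.
  destruct (inv_small eps He) as [K HK].
  destruct (Hq eps He (Nat.max N K)) as [k [Hk1 Hk2]].
  exists (phi k). destruct (Hphi k) as [H1 H2]. split. lia. split; auto.
  apply Rlt_trans with (/ INR (S k)); auto. apply HK. lia.
Qed.

Lemma iter_S {X} (f : X -> X) n x : iter f (S n) x = f (iter f n x).
Proof. reflexivity. Qed.

Lemma iter_add {X} (f : X -> X) i n x : iter f i (iter f n x) = iter f (i + n) x.
Proof. unfold iter. rewrite Nat.iter_add. reflexivity. Qed.

Lemma iter_cont {X} (d : X -> X -> R) f : continuous d f -> forall i, continuous d (iter f i).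
Proof.
  intros Hf i. induction i as [|i IH]; intros p eps He.
  - exists eps; split; auto.
  - destruct (Hf (iter f i p) eps He) as [r [Hr Hr']].
    destruct (IH p r Hr) as [r2 [Hr2 Hr2']].
    exists r2; split; auto. intros y Hy. rewrite !iter_S. apply Hr'. auto.
Qed.

Lemma iter_cont_fin {X} (d : X -> X -> R) f : continuous d f ->
  forall L p eps, 0 < eps -> exists rho, 0 < rho /\ forall y, d p y < rho ->
    forall i, (i < L)%nat -> d (iter f i p) (iter f i y) < eps.
Proof.
  intros Hf L p eps He. induction L as [|L IH].
  - exists 1; split; [lra|]. intros; lia.
  - destruct IH as [r [Hr Hr']].
    destruct (iter_cont d f Hf L p eps He) as [r2 [Hr2 Hr2']].
    exists (Rmin r r2); split. apply Rmin_pos; auto.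
    intros y Hy i Hi. destruct (Nat.eq_dec i L) as [->|Hne].
    + apply Hr2'. eapply Rlt_le_trans; [apply Hy|apply Rmin_r].
    + apply Hr'; [eapply Rlt_le_trans; [apply Hy|apply Rmin_l]|lia].
Qed.

Lemma iter_inv {X} (f : X -> X) A : invariant f A -> forall n z, A z -> A (iter f n z).
Proof. intros HA n z Hz; induction n; simpl; auto. Qed.

Section OC.
Context {X : Type} (d : X -> X -> R) (Hd : is_metric d) (f : X -> X) (Hf : continuous d f).

Lemma oc_closed y : is_closed d (orbit_closure d f y).
Proof.
  intros z Hz. unfold orbit_closure in Hz.
  apply not_all_ex_not in Hz. destruct Hz as [eps Hz].
  apply imply_to_and in Hz. destruct Hz as [He Hz].
  exists (eps/2). split. lra. intros w Hw Hoc.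
  apply Hz. destruct (Hoc (eps/2) ltac:(lra)) as [n Hn]. exists n.
  pose proof (d_tri d Hd (iter f n y) w z). rewrite (d_sym d Hd w z) in H. lra.
Qed.

Lemma oc_self y : orbit_closure d f y y.
Proof. intros eps He. exists 0%nat. simpl. rewrite d_refl; auto. Qed.

Lemma oc_orbit y n : orbit_closure d f y (iter f n y).
Proof. intros eps He. exists n. rewrite d_refl; auto. Qed.

Lemma oc_inv y : invariant f (orbit_closure d f y).
Proof.
  intros z Hz eps He.
  destruct (Hf z eps He) as [r [Hr Hr']].
  destruct (Hz r Hr) as [n Hn]. exists (S n). rewrite iter_S, d_sym; auto.
  apply Hr'. rewrite d_sym; auto.
Qed.

Lemma oc_sub (A : X -> Prop) y : is_closed d A -> invariant f A -> A y ->
  forall z, orbit_closure d f y z -> A z.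
Proof.
  intros HA Hi Hy z Hz. apply (closed_limit d Hd A z HA).
  intros eps He. destruct (Hz eps He) as [n Hn]. exists (iter f n y). split.
  apply iter_inv; auto. rewrite d_sym; auto.
Qed.

Lemma Tran_close y : Tran d f y -> forall z eps, 0 < eps -> exists n, d z (iter f n y) < eps.
Proof.
  intros Hy z eps He. destruct (Hy z eps He) as [w [[n ->] Hw]]. eauto.
Qed.

Lemma Tran_oc y : Tran d f y -> forall z, orbit_closure d f y z.
Proof.
  intros Hy z eps He. destruct (Tran_close y Hy z eps He) as [n Hn]. exists n.
  rewrite d_sym; auto.
Qed.

Lemma minimal_oc M q : minimal_set d f M -> M q -> forall w, M w -> orbit_closure d f q w.
Proof.
  intros [_ [HMc [HMi HMm]]] Hq w Hw.
  apply (HMm (orbit_closure d f q)); auto.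
  - exists q. apply oc_self.
  - apply oc_closed.
  - apply oc_inv.
  - intros z Hz. apply (oc_sub M q HMc HMi Hq z Hz).
Qed.

End OC.

Lemma synd_gap (A : nat -> Prop) : syndetic A -> exists L, forall n, exists i, (i < L)%nat /\ A (n + i)%nat.
Proof.
  intros HA. apply NNPP. intros H.
  destruct (HA (fun n => ~ A n)) as [n [H1 H2]]; auto.
  intros L. apply NNPP. intros H3. apply H. exists L. intros n.
  apply NNPP. intros H4. apply H3. exists n. intros i Hi H5. apply H4. exists i; auto.
Qed.

Lemma minimal_set_ext {X} (d : X -> X -> R) f (M N : X -> Prop) :
  (forall z, M z <-> N z) -> minimal_set d f M -> minimal_set d f N.
Proof.
  intros E [[z Hz] [Hc [Hi Hm]]]. split; [|split; [|split]].
  - exists z; apply E; auto.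
  - intros w Hw. destruct (Hc w) as [r [Hr Hr']]. intros Mw; apply Hw, E, Mw.
    exists r; split; auto. intros y Hy Ny. apply (Hr' y Hy). apply E; auto.
  - intros w Hw. apply E, Hi, E, Hw.
  - intros K HK Kc Ki Ksub w Hw. apply (Hm K HK Kc Ki); [|apply E, Hw].
    intros y Ky. apply E, Ksub, Ky.
Qed.

Section Grp.
Context {X : Type} (mul : X -> X -> X) (inv : X -> X) (e : X) (Hgrp : is_group mul inv e).

Lemma g_assoc a b c : mul a (mul b c) = mul (mul a b) c.
Proof. destruct Hgrp as (H&_). apply H. Qed.
Lemma g_el a : mul e a = a.
Proof. destruct Hgrp as (_&H&_). apply H. Qed.
Lemma g_er a : mul a e = a.
Proof. destruct Hgrp as (_&H&_). apply H. Qed.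
Lemma g_il a : mul (inv a) a = e.
Proof. destruct Hgrp as (_&_&H). apply H. Qed.
Lemma g_ir a : mul a (inv a) = e.
Proof. destruct Hgrp as (_&_&H). apply H. Qed.

Lemma g_mulK u w : mul (mul u w) (inv w) = u.
Proof. rewrite <- g_assoc, g_ir, g_er. reflexivity. Qed.

Lemma g_rcancel a b x : mul a x = mul b x -> a = b.
Proof. intros H. rewrite <- (g_mulK a x), <- (g_mulK b x), H. reflexivity. Qed.

Lemma f_e f : group_hom mul f -> f e = e.
Proof.
  intros Hf. pose proof (Hf e e) as H. rewrite g_el in H.
  rewrite <- (g_el (f e)) in H at 1. symmetry. eapply g_rcancel; eauto.
Qed.

Lemma iter_e f : group_hom mul f -> forall n, iter f n e = e.
Proof. intros Hf n; induction n; auto. rewrite iter_S, IHn. apply f_e; auto. Qed.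

Lemma iter_mul f : group_hom mul f -> forall n u v, iter f n (mul u v) = mul (iter f n u) (iter f n v).
Proof. intros Hf n u v; induction n; auto. rewrite !iter_S, IHn. apply Hf. Qed.
End Grp.

Lemma unif_cont {X} (d : X -> X -> R) (Hd : is_metric d) (Hc : compact_space d) (mul : X -> X -> X)
  (Hm : continuous2 d mul) :
  forall eps, 0 < eps -> exists delta, 0 < delta /\ forall u v w, d u v < delta -> d (mul u w) (mul v w) < eps.
Proof.
  intros eps He. apply NNPP. intros H.
  assert (H' : forall k : nat, exists t : X * X * X, let '(u, v, w) := t in
     d u v < / INR (S k) /\ ~ d (mul u w) (mul v w) < eps).
  { intros k. apply NNPP. intros H1. apply H. exists (/ INR (S k)). split. apply inv_pos.
    intros u v w Huv. apply NNPP. intros H2. apply H1. exists (u, v, w). auto. }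
  set (t := fun k => proj1_sig (constructive_indefinite_description _ (H' k))).
  assert (Ht : forall k, let '(u, v, w) := t k in d u v < / INR (S k) /\ ~ d (mul u w) (mul v w) < eps).
  { intros k. unfold t. destruct (constructive_indefinite_description _ (H' k)). simpl. auto. }
  destruct (cluster2 d Hd Hc (fun k => fst (fst (t k))) (fun k => snd (t k))) as [p [q Hpq]].
  destruct (Hm p q (eps/2) ltac:(lra)) as [r [Hr Hr']].
  destruct (inv_small (r/2) ltac:(lra)) as [K HK].
  destruct (Hpq (r/2) ltac:(lra) K) as [k [Hk [H1 H2]]].
  specialize (Ht k). specialize (HK k Hk). destruct (t k) as [[u v] w]. cbn [fst snd] in *.
  destruct Ht as [Huv Hne]. apply Hne.
  assert (d p v < r). { pose proof (d_tri d Hd p u v). lra. }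
  assert (A1 : d p u < r) by lra. assert (A2 : d q w < r) by lra.
  pose proof (Hr' u w A1 A2). pose proof (Hr' v w H0 A2).
  pose proof (d_tri d Hd (mul u w) (mul p q) (mul v w)). rewrite (d_sym d Hd (mul u w) (mul p q)) in H5. lra.
Qed.

Section TransProd.
Context {X : Type} (d : X -> X -> R) (Hd : is_metric d) (Hc : compact_space d)
  (mul : X -> X -> X) (inv : X -> X) (e : X) (Hgrp : is_group mul inv e)
  (Hmul : continuous2 d mul) (f : X -> X) (Hf : continuous d f) (Hfhom : group_hom mul f)
  (Hdense : dense d (MinPts d f)) (a x : X) (Ha : SProx d f a e) (Hx : Tran d f x).

Definition KK p q := forall eps, 0 < eps -> exists n, d (iter f n a) p < eps /\ d (iter f n x) q < eps.

Lemma KK_inv p q : KK p q -> forall i, KK (iter f i p) (iter f i q).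
Proof.
  intros H i eps He.
  destruct (iter_cont d f Hf i p eps He) as [r1 [Hr1 Hr1']].
  destruct (iter_cont d f Hf i q eps He) as [r2 [Hr2 Hr2']].
  destruct (H (Rmin r1 r2) (Rmin_pos _ _ Hr1 Hr2)) as [n [Hn1 Hn2]].
  exists (i + n)%nat. rewrite <- !iter_add. rewrite !(d_sym d Hd (iter f i (iter f n _))).
  split; [apply Hr1'|apply Hr2']; rewrite d_sym; auto.
  - eapply Rlt_le_trans; [apply Hn1|apply Rmin_l].
  - eapply Rlt_le_trans; [apply Hn2|apply Rmin_r].
Qed.

Lemma KK_closed p q : (forall eps, 0 < eps -> exists p' q', KK p' q' /\ d p p' < eps /\ d q q' < eps) -> KK p q.
Proof.
  intros H eps He. destruct (H (eps/2) ltac:(lra)) as [p' [q' [HK [H1 H2]]]].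
  destruct (HK (eps/2) ltac:(lra)) as [n [H3 H4]]. exists n.
  pose proof (d_tri d Hd (iter f n a) p' p). pose proof (d_tri d Hd (iter f n x) q' q).
  rewrite (d_sym d Hd p' p) in H0. rewrite (d_sym d Hd q' q) in H5. lra.
Qed.

Lemma KK_prop p q : KK p q -> forall delta, 0 < delta -> exists i, d (iter f i p) e < delta.
Proof.
  intros HK delta Hde.
  destruct (synd_gap _ (Ha (delta/2) ltac:(lra))) as [L HL].
  destruct (iter_cont_fin d f Hf L p (delta/2) ltac:(lra)) as [r [Hr Hr']].
  destruct (HK r Hr) as [n [Hn _]].
  destruct (HL n) as [i [Hi Hi']]. exists i.
  rewrite (iter_e mul inv e Hgrp f Hfhom) in Hi'.
  specialize (Hr' (iter f n a) ltac:(rewrite d_sym; auto) i Hi).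
  rewrite iter_add, Nat.add_comm in Hr'.
  pose proof (d_tri d Hd (iter f i p) (iter f (n + i) a) e). lra.
Qed.

Lemma step1 m : exists u, KK u m.
Proof.
  assert (H : forall k, exists n, d m (iter f n x) < / INR (S k)).
  { intros k. apply (Tran_close d f x Hx m). apply inv_pos. }
  set (nk := fun k => proj1_sig (constructive_indefinite_description _ (H k))).
  assert (Hnk : forall k, d m (iter f (nk k) x) < / INR (S k)).
  { intros k. unfold nk. destruct (constructive_indefinite_description _ (H k)); auto. }
  destruct (cluster d Hd Hc (fun k => iter f (nk k) a)) as [u Hu].
  exists u. intros eps He.
  destruct (inv_small eps He) as [K HK].
  destruct (Hu eps He K) as [k [Hk Hk']]. exists (nk k). split.
  - rewrite d_sym; auto.
  - rewrite d_sym; auto. apply Rlt_trans with (/ INR (S k)); auto.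
Qed.

Lemma step2 u m M : KK u m -> minimal_set d f M -> M m -> exists q0, KK e q0 /\ M q0.
Proof.
  intros HK HM Hm.
  assert (H : forall k, exists i, d (iter f i u) e < / INR (S k)).
  { intros k. apply (KK_prop u m HK). apply inv_pos. }
  set (ik := fun k => proj1_sig (constructive_indefinite_description _ (H k))).
  assert (Hik : forall k, d (iter f (ik k) u) e < / INR (S k)).
  { intros k. unfold ik. destruct (constructive_indefinite_description _ (H k)); auto. }
  destruct (cluster2 d Hd Hc (fun k => iter f (ik k) u) (fun k => iter f (ik k) m)) as [e' [q0 Hq]].
  assert (Ee : e' = e).
  { apply (d_eq d Hd). intros eps He.
    destruct (inv_small (eps/2) ltac:(lra)) as [K HK2].
    destruct (Hq (eps/2) ltac:(lra) K) as [k [Hk [H1 H2]]].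
    specialize (HK2 k Hk). specialize (Hik k).
    pose proof (d_tri d Hd e' (iter f (ik k) u) e). lra. }
  subst e'. exists q0. split.
  - apply KK_closed. intros eps He. destruct (Hq eps He 0%nat) as [k [_ [H1 H2]]].
    exists (iter f (ik k) u), (iter f (ik k) m). split; auto. apply KK_inv; auto.
  - destruct HM as [_ [HMc [HMi _]]]. apply (closed_limit d Hd M q0 HMc).
    intros eps He. destruct (Hq eps He 0%nat) as [k [_ [H1 H2]]].
    exists (iter f (ik k) m). split; auto. apply iter_inv; auto.
Qed.

Lemma step3 m : MinPts d f m -> KK e m.
Proof.
  intros [M [HM Hm]].
  destruct (step1 m) as [u Hu].
  destruct (step2 u m M Hu HM Hm) as [q0 [Hq0 Mq0]].
  pose proof (minimal_oc d Hd f Hf M q0 HM Mq0 m Hm) as Hoc.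
  intros eps He. destruct (Hoc (eps/2) ltac:(lra)) as [j Hj].
  pose proof (KK_inv e q0 Hq0 j) as H. rewrite (iter_e mul inv e Hgrp f Hfhom) in H.
  destruct (H (eps/2) ltac:(lra)) as [n [H1 H2]]. exists n. split. lra.
  pose proof (d_tri d Hd (iter f n x) (iter f j q0) m). lra.
Qed.

Lemma trans_ax : Tran d f (mul a x).
Proof.
  intros z eps He.
  destruct (Hdense z (eps/2) ltac:(lra)) as [m [Hm Hzm]].
  destruct (Hmul e m (eps/2) ltac:(lra)) as [r [Hr Hr']].
  destruct (step3 m Hm r Hr) as [n [H1 H2]].
  exists (iter f n (mul a x)). split. eauto.
  rewrite (iter_mul mul f Hfhom).
  specialize (Hr' (iter f n a) (iter f n x) ltac:(rewrite d_sym; auto) ltac:(rewrite d_sym; auto)).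
  rewrite (g_el mul inv e Hgrp) in Hr'.
  pose proof (d_tri d Hd z m (mul (iter f n a) (iter f n x))). lra.
Qed.
End TransProd.

Lemma synd_mono (A B : nat -> Prop) : (forall n, A n -> B n) -> syndetic A -> syndetic B.
Proof. intros H HA C HC. destruct (HA C HC) as [n [H1 H2]]. eauto. Qed.

Lemma synd_thick (A B : nat -> Prop) : syndetic A -> thick B -> (forall n, B n -> ~ A n) -> False.
Proof. intros HA HB H. destruct (HA B HB) as [n [H1 H2]]. eapply H; eauto. Qed.

Section Main.
Context {X : Type} (d : X -> X -> R) (Hd : is_metric d) (Hc : compact_space d)
  (mul : X -> X -> X) (inv : X -> X) (e : X) (Hgrp : is_group mul inv e)
  (f : X -> X) (Hf : continuous d f) (Hfhom : group_hom mul f)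
  (Hdense : dense d (MinPts d f)) (Hinf : @infinite_type X) (x : X) (Hx : Tran d f x).

Lemma single_closed : is_closed d (fun w => w = e).
Proof.
  intros z Hz. exists (d z e). split.
  - destruct (Rle_or_lt (d z e) 0) as [H|H]; auto. exfalso. apply Hz.
    apply (d_eq d Hd). intros eps He. lra.
  - intros y Hy ->. lra.
Qed.

Lemma single_inv : invariant f (fun w => w = e).
Proof. intros w ->. apply (f_e mul inv e Hgrp f Hfhom). Qed.

Lemma min_e M : minimal_set d f M -> M e -> forall w, M w -> w = e.
Proof.
  intros [_ [_ [_ Hm]]] He w Hw. apply (Hm (fun w => w = e)); auto.
  - exists e; auto.
  - apply single_closed.
  - apply single_inv.
  - intros y ->; auto.
Qed.

Lemma U_closed (L : list (X -> Prop)) :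
  is_closed d (fun z => exists N, In N L /\ minimal_set d f N /\ N z).
Proof.
  induction L as [|N L IH]; intros z Hz.
  - exists 1. split. lra. intros y _ [N [[] _]].
  - assert (H1 : ~ (minimal_set d f N /\ N z)). { intros [A B]. apply Hz. exists N. simpl; auto. }
    assert (H2 : ~ exists N', In N' L /\ minimal_set d f N' /\ N' z).
    { intros [N' [A B]]. apply Hz. exists N'. simpl; auto. }
    destruct (IH z H2) as [r2 [Hr2 Hr2']].
    assert (H3 : exists r1, 0 < r1 /\ forall y, d z y < r1 -> ~ (minimal_set d f N /\ N y)).
    { destruct (classic (minimal_set d f N)) as [HN|HN].
      - assert (~ N z) by (intros Nz; apply H1; split; auto). destruct HN as [Hne [HNc HNi]].
        destruct (HNc z H) as [r [Hr Hr']]. exists r. split; auto. intros y Hy [_ Ny]. apply (Hr' y Hy Ny).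
      - exists 1. split. lra. tauto. }
    destruct H3 as [r1 [Hr1 Hr1']].
    exists (Rmin r1 r2). split. apply Rmin_pos; auto.
    intros y Hy [N' [[<-|Hin] [HN' N'y]]].
    + apply (Hr1' y). eapply Rlt_le_trans; [apply Hy|apply Rmin_l]. auto.
    + apply (Hr2' y). eapply Rlt_le_trans; [apply Hy|apply Rmin_r]. eauto.
Qed.

Lemma claim_new (L : list (X -> Prop)) :
  exists M, minimal_set d f M /\ forall N, In N L -> ~ (forall z, M z <-> N z).
Proof.
  apply NNPP. intros H.
  assert (H' : forall M, minimal_set d f M -> exists N, In N L /\ (forall z, M z <-> N z)).
  { intros M HM. apply NNPP. intros H1. apply H. exists M. split; auto. intros N HN E. apply H1. eauto. }
  assert (HU : forall z, exists N, In N L /\ minimal_set d f N /\ N z).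
  { intros z. apply (closed_limit d Hd _ z (U_closed L)). intros eps He.
    destruct (Hdense z eps He) as [w [[M [HM Mw]] Hw]]. exists w. split; auto.
    destruct (H' M HM) as [N [HN E]]. exists N. split; auto. split.
    apply (minimal_set_ext d f M N E HM). apply E; auto. }
  destruct (HU x) as [N [_ [HN Nx]]].
  assert (Hall : forall z, N z).
  { intros z. destruct HN as [_ [HNc [HNi _]]]. apply (oc_sub d Hd f N x HNc HNi Nx).
    apply (Tran_oc d Hd f x Hx). }
  apply Hinf. exists (e :: nil). intros z. left. symmetry. apply (min_e N HN (Hall e) z (Hall z)).
Qed.

Fixpoint Ls (k : nat) : list (X -> Prop) :=
  match k with
  | O => nil
  | S k => proj1_sig (constructive_indefinite_description _ (claim_new (Ls k))) :: Ls k
  end.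

Definition Ms (k : nat) : X -> Prop := proj1_sig (constructive_indefinite_description _ (claim_new (Ls k))).

Lemma Ms_spec k : minimal_set d f (Ms k) /\ forall N, In N (Ls k) -> ~ (forall z, Ms k z <-> N z).
Proof. unfold Ms. destruct (constructive_indefinite_description _ (claim_new (Ls k))); auto. Qed.

Lemma Ms_in i j : (i < j)%nat -> In (Ms i) (Ls j).
Proof.
  induction j as [|j IH]; intros H. lia.
  simpl. destruct (Nat.eq_dec i j) as [->|Hne]. left. reflexivity.
  right. apply IH. lia.
Qed.

Lemma Ms_distinct i j : i <> j -> ~ (forall z, Ms i z <-> Ms j z).
Proof.
  intros Hij E. destruct (Nat.lt_gt_cases i j) as [[H|H] _]; auto.
  - apply ((proj2 (Ms_spec j)) (Ms i) (Ms_in i j H)). intros z. symmetry. apply E.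
  - apply ((proj2 (Ms_spec i)) (Ms j) (Ms_in j i H)). apply E.
Qed.

Lemma sep y z p (C : X -> Prop) r : orbit_closure d f y p -> invariant f C -> C z -> 0 < r ->
  (forall i c, C c -> r <= d (iter f i p) c) -> ~ SProx d f y z.
Proof.
  intros Hp HC Cz Hr Hsep Hs.
  apply (synd_thick _ (fun n => ~ d (iter f n y) (iter f n z) < r/2) (Hs (r/2) ltac:(lra))).
  - intros L. destruct (iter_cont_fin d f Hf L p (r/2) ltac:(lra)) as [rho [Hrho Hrho']].
    destruct (Hp rho Hrho) as [n Hn]. exists n. intros i Hi Hlt.
    specialize (Hrho' (iter f n y) ltac:(rewrite d_sym; auto) i Hi).
    rewrite iter_add, Nat.add_comm in Hrho'.
    specialize (Hsep i (iter f (n + i) z) (iter_inv f C HC _ z Cz)).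
    pose proof (d_tri d Hd (iter f i p) (iter f (n + i) y) (iter f (n + i) z)). lra.
  - auto.
Qed.

Lemma part3 y : Tran d f y -> forall z, SProx d f y z -> ~ MinPts d f z.
Proof.
  intros Hy z Hs [M [HM Mz]].
  destruct (classic (M e)) as [Me|Me].
  - pose proof (min_e M HM Me z Mz) as ->.
    destruct (claim_new ((fun w => w = e) :: nil)) as [M2 [HM2 HM2']].
    assert (NM2 : ~ M2 e).
    { intros M2e. apply (HM2' (fun w => w = e)). left; auto. intros w. split.
      apply (min_e M2 HM2 M2e). intros ->; auto. }
    destruct HM2 as [[p Mp] [HM2c [HM2i _]]].
    destruct (closed_compl d M2 e HM2c NM2) as [r [Hr Hr']].
    apply (sep y e p (fun w => w = e) r); auto.
    + apply (Tran_oc d Hd f y Hy).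
    + apply single_inv.
    + intros i c ->. rewrite d_sym; auto. apply Hr'. apply iter_inv; auto.
  - destruct HM as [_ [HMc [HMi _]]].
    destruct (closed_compl d M e HMc Me) as [r [Hr Hr']].
    apply (sep y z e M r); auto.
    + apply (Tran_oc d Hd f y Hy).
    + intros i c Hc'. rewrite (iter_e mul inv e Hgrp f Hfhom). auto.
Qed.

End Main.

Theorem theorem4p3
  (X : Type) (d : X -> X -> R) (mul : X -> X -> X) (inv : X -> X) (e : X)
  (f : X -> X)
  (Hd : is_metric d) (Hcpt : compact_space d) (Hinf : @infinite_type X)
  (Hgrp : is_group mul inv e) (Hmul : continuous2 d mul) (Hinv : continuous d inv)
  (Hfc : continuous d f) (Hfhom : group_hom mul f)
  (Htr : transitive d f) (Hdense : dense d (MinPts d f))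
  (S : X -> Prop) (HS : synd_scrambled d f S) (HeS : S e)
  (x : X) (Hx : Tran d f x) :
  let T := fun z => exists a, S a /\ z = mul a x in
  (* (i) *)
  (homeomorphic d S T /\ synd_scrambled d f T /\
   (forall (d' : X -> X -> R) (eps : R),
      compatible_metric d d' -> two_sided_invariant mul d' ->
      synd_eps_scrambled d' f eps S -> synd_eps_scrambled d' f eps T)) /\
  (* (ii) *)
  (forall y, T y -> Tran d f y) /\
  (forall y, T y ->
     exists Ms : nat -> X -> Prop,
       (forall k, minimal_set d f (Ms k)) /\
       (forall k z, Ms k z -> orbit_closure d f y z) /\
       (forall i j, i <> j -> ~ (forall z, Ms i z <-> Ms j z))) /\
  (* (iii) *)
  (forall y, T y -> forall z, SProx d f y z -> ~ MinPts d f z).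
Proof.
  intros T.
  assert (HT : forall y, T y -> Tran d f y).
  { intros y [a [Sa ->]]. destruct (classic (a = e)) as [->|Hae].
    - rewrite (g_el mul inv e Hgrp). auto.
    - apply (trans_ax d Hd Hcpt mul inv e Hgrp Hmul f Hfc Hfhom Hdense a x); auto.
      apply (proj2 HS a e Sa HeS Hae). }
  assert (Hex : exists a b, T a /\ T b /\ a <> b).
  { destruct HS as [[a [b [Sa [Sb Hab]]]] _]. exists (mul a x), (mul b x).
    split; [exists a; auto|]. split; [exists b; auto|].
    intros E. apply Hab. eapply g_rcancel; eauto. }
  assert (Hpair : forall a' b', T a' -> T b' -> a' <> b' ->
     exists a b, S a /\ S b /\ a <> b /\ a' = mul a x /\ b' = mul b x).
  { intros a' b' [a [Sa ->]] [b [Sb ->]] Hne. exists a, b. repeat split; auto.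
    intros ->. auto. }
  split; [split; [|split]|split; [|split]].
  -
    exists (fun a => mul a x), (fun b => mul b (inv x)).
    split; [|split; [|split; [|split]]].
    + intros a Sa. exists a; auto.
    + intros b [a [Sa ->]]. rewrite (g_mulK mul inv e Hgrp). auto.
    + intros a _. apply (g_mulK mul inv e Hgrp).
    + intros b [a [Sa ->]]. rewrite (g_mulK mul inv e Hgrp). auto.
    + split.
      * intros z eps _ He. destruct (Hmul z x eps He) as [r [Hr Hr']]. exists r; split; auto.
        intros y _ Hy. apply Hr'; auto. rewrite (d_refl d Hd); auto.
      * intros z eps _ He. destruct (Hmul z (inv x) eps He) as [r [Hr Hr']]. exists r; split; auto.
        intros y _ Hy. apply Hr'; auto. rewrite (d_refl d Hd); auto.
  -
    split; auto. intros a' b' Ta' Tb' Hne.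
    destruct (Hpair a' b' Ta' Tb' Hne) as [a [b [Sa [Sb [Hab [-> ->]]]]]].
    destruct (proj2 HS a b Sa Sb Hab) as [Hsp Hna]. split.
    + intros eps He. destruct (unif_cont d Hd Hcpt mul Hmul eps He) as [r [Hr Hr']].
      eapply synd_mono; [|apply (Hsp r Hr)]. intros n Hn; simpl in *.
      rewrite !(iter_mul mul f Hfhom). apply Hr'. auto.
    + intros Has. apply Hna. intros eps He.
      destruct (unif_cont d Hd Hcpt mul Hmul eps He) as [r [Hr Hr']].
      destruct (Has r Hr) as [N HN]. exists N. intros n Hn.
      rewrite <- (g_mulK mul inv e Hgrp (iter f n a) (iter f n x)).
      rewrite <- (g_mulK mul inv e Hgrp (iter f n b) (iter f n x)).
      apply Hr'. rewrite <- !(iter_mul mul f Hfhom). apply HN; auto.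
  -
    intros d' eps Hcomp Hinvd [[_ Hsc] Hls].
    assert (E : forall a b n, d' (iter f n (mul a x)) (iter f n (mul b x)) = d' (iter f n a) (iter f n b)).
    { intros a b n. rewrite !(iter_mul mul f Hfhom). symmetry. apply (proj1 (Hinvd _ _ _)). }
    split; [split|].
    + exact Hex.
    + intros a' b' Ta' Tb' Hne.
      destruct (Hpair a' b' Ta' Tb' Hne) as [a [b [Sa [Sb [Hab [-> ->]]]]]].
      destruct (Hsc a b Sa Sb Hab) as [Hsp Hna]. split.
      * intros r Hr. eapply synd_mono; [|apply (Hsp r Hr)]. intros n Hn; simpl in *. rewrite E. auto.
      * intros Has. apply Hna. intros r Hr. destruct (Has r Hr) as [N HN]. exists N.
        intros n Hn. rewrite <- E. auto.
    + intros a' b' Ta' Tb' Hne.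
      destruct (Hpair a' b' Ta' Tb' Hne) as [a [b [Sa [Sb [Hab [-> ->]]]]]].
      intros delta Hdel N. destruct (Hls a b Sa Sb Hab delta Hdel N) as [n [Hn1 Hn2]].
      exists n. rewrite E. auto.
  - exact HT.
  - intros y Ty. exists (Ms d Hd mul inv e Hgrp f Hfhom Hdense Hinf x Hx).
    split; [|split].
    + intros k. apply Ms_spec.
    + intros k z _. apply (Tran_oc d Hd f y (HT y Ty)).
    + apply Ms_distinct.
  - intros y Ty. apply (part3 d Hd mul inv e Hgrp f Hfc Hfhom Hdense Hinf x Hx y (HT y Ty)).
Qed.
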